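(* Define $f_{\mathrm{HbM}}(X)=\operatorname{diag}(|X|\mathbf{1}_n)^{-1}XX^{\top}$ and consider the dynamical system $X(t+1)=f_{\mathrm{HbM}}(X(t))$, $t\in\mathbb{Z}_{\ge0}$. Pick $X_0\in\mathcal{S}_{\mathrm{nz\text{-}row}}$. Then: (i) $f_{\mathrm{HbM}}$ is well-defined for every $X\in\mathcal{S}_{\mathrm{nz\text{-}row}}$ and maps $\mathcal{S}_{\mathrm{nz\text{-}row}}$ into $\mathcal{S}^{+}_{\mathrm{s\text{-}symm}}$; (ii) the solution $X(t)$, $t\in\mathbb{Z}_{\ge0}$, from the initial condition $X(0)=X_0$ exists and is unique; (iii) every such solution satisfies $\max_{i,j}|X_{ij}(t+1)|\le\max_{i,j}|X_{ij}(t)|\le\max_{i,j}|X_{ij}(0)|$ for all $t$; (iv) for every $c>0$, the trajectory $cX(t)$ is the solution from the initial condition $X(0)=cX_0$.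
   Context: $\mathbf{1}_n$ is the all-ones vector, $|X|$ is the entry-wise absolute value, $\operatorname{sign}$ is entry-wise sign, $X_{i*}$ is the $i$-th row. $\mathcal{S}_{\mathrm{nz\text{-}row}}=\{X\in\mathbb{R}^{n\times n}: X_{i*}\neq\mathbf{0}_n^{\top}\text{ for every }i\}$. $\mathcal{S}^{+}_{\mathrm{s\text{-}symm}}=\{X\in\mathbb{R}^{n\times n}:\operatorname{sign}(X)=\operatorname{sign}(X)^{\top}\text{ and }X_{ii}>0\text{ for every }i\}$. *)

(* Defs.v *)
From mathcomp Require Import all_boot all_order all_algebra.
Set Implicit Arguments. Unset Strict Implicit. Unset Printing Implicit Defensive.
Import Order.TTheory GRing.Theory Num.Theory.
Local Open Scope ring_scope.

Definition absrowsum (R : realFieldType) (n : nat) (X : 'M[R]_n) : 'cV[R]_n :=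
  map_mx Num.norm X *m const_mx 1.

Definition Dabs (R : realFieldType) (n : nat) (X : 'M[R]_n) : 'M[R]_n :=
  diag_mx (absrowsum X)^T.

Definition fHbM (R : realFieldType) (n : nat) (X : 'M[R]_n) : 'M[R]_n :=
  invmx (Dabs X) *m (X *m X^T).

Definition S_nzrow (R : realFieldType) (n : nat) (X : 'M[R]_n) : Prop :=
  forall i : 'I_n, row i X != 0.

Definition S_ssymm_pos (R : realFieldType) (n : nat) (X : 'M[R]_n) : Prop :=
  map_mx Num.sg X = (map_mx Num.sg X)^T /\ (forall i : 'I_n, 0 < X i i).

(* X : nat -> matrices is a solution of X(t+1) = f_HbM(X(t)) with X(0) = X0,
   f_HbM being applied only on its domain S_{nz-row} *)
Definition is_solution (R : realFieldType) (n : nat) (X0 : 'M[R]_n)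
  (X : nat -> 'M[R]_n) : Prop :=
  X 0%N = X0 /\ (forall t : nat, S_nzrow (X t) /\ X t.+1 = fHbM (X t)).

(* max_{i,j} |X_ij| (0 for the empty matrix) *)
Definition maxabs (R : realFieldType) (n : nat) (X : 'M[R]_n) : R :=
  \big[Num.max/0]_(ij : 'I_n * 'I_n) `|X ij.1 ij.2|.

(* Main.v *)
Require Import Defs.
From mathcomp Require Import all_boot all_order all_algebra.
From mathcomp Require Import ring.
Import Order.TTheory GRing.Theory Num.Theory.
Local Open Scope ring_scope.
Set Implicit Arguments. Unset Strict Implicit.

Section H.
Variables (R : realFieldType) (n : nat).
Implicit Types X : 'M[R]_n.

Definition srow X (i : 'I_n) : R := \sum_j `|X i j|.

Lemma absrowsumE X i : absrowsum X i 0 = srow X i.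
Proof. rewrite /absrowsum mxE; apply: eq_bigr => j _; by rewrite !mxE mulr1. Qed.

Lemma nzrow_ex X i : row i X != 0 -> exists j, X i j != 0.
Proof.
move=> H; apply/existsP; apply: contraNT H; rewrite negb_exists => /forallP H.
by apply/eqP/rowP => j; rewrite !mxE; apply/eqP; move: (H j); rewrite negbK.
Qed.

Lemma srow_gt0 X i : row i X != 0 -> 0 < srow X i.
Proof.
move=> /nzrow_ex [j Hj]; rewrite /srow (bigD1 j) //=.
apply: (lt_le_trans (y := `|X i j|)); first by rewrite normr_gt0.
by rewrite lerDl sumr_ge0.
Qed.

Lemma fHbM_entry X : S_nzrow X ->
  Dabs X \in unitmx /\ forall i j, fHbM X i j = (X *m X^T) i j / srow X i.
Proof.
move=> H.
have sp i : srow X i != 0 by rewrite gt_eqF // srow_gt0.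
set E : 'M[R]_n := diag_mx (\row_i (srow X i)^-1).
have ED : E *m Dabs X = 1%:M.
  rewrite /E /Dabs mulmx_diag -diag_const_mx; congr diag_mx; apply/rowP => i.
  rewrite !mxE; have := absrowsumE X i; rewrite /absrowsum mxE => ->; exact: mulVf.
have [_ U] := mulmx1_unit ED.
split => //; rewrite /fHbM.
have -> : invmx (Dabs X) = E.
  by rewrite -[E]mulmx1 -(mulmxV U) mulmxA ED mul1mx.
move=> i j; by rewrite /E mul_diag_mx !mxE mulrC.
Qed.

Lemma XXT_sym X i j : (X *m X^T) i j = (X *m X^T) j i.
Proof. rewrite !mxE; apply: eq_bigr => k _; by rewrite !mxE mulrC. Qed.

Lemma XXT_diag X i : row i X != 0 -> 0 < (X *m X^T) i i.
Proof.
move=> /nzrow_ex [j Hj]; rewrite mxE (bigD1 j) //= mxE.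
apply: (lt_le_trans (y := X i j * X i j)).
  by rewrite -expr2 exprn_even_gt0.
rewrite lerDl sumr_ge0 // => k _; by rewrite mxE -expr2 sqr_ge0.
Qed.

Lemma fHbM_ssymm X : S_nzrow X -> S_ssymm_pos (fHbM X).
Proof.
move=> H; have [_ E] := fHbM_entry H; split.
  move: (fHbM X) E => F E; apply/matrixP => i j; rewrite !mxE !E !sgrM XXT_sym.
  have P k : 0 < (srow X k)^-1 by rewrite invr_gt0 srow_gt0.
  by rewrite !(gtr0_sg (P _)).
move=> i; by rewrite E divr_gt0 ?XXT_diag ?srow_gt0 ?H.
Qed.

Lemma ssymm_nzrow X : S_ssymm_pos X -> S_nzrow X.
Proof.
move=> [_ H] i; apply/eqP => /rowP /(_ i); rewrite !mxE => E.
by move: (H i); rewrite E ltxx.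
Qed.

Lemma maxabs_ge X i j : `|X i j| <= maxabs X.
Proof. exact: (le_bigmax _ _ (i, j)). Qed.

Lemma maxabs_le X M : 0 <= M -> (forall i j, `|X i j| <= M) -> maxabs X <= M.
Proof.
move=> M0 H; rewrite /maxabs; apply: bigmax_le => // [[i j]] _; exact: H.
Qed.

Lemma maxabs_ge0 X : 0 <= maxabs X.
Proof. exact: bigmax_ge_id. Qed.

Lemma fHbM_max X : S_nzrow X -> maxabs (fHbM X) <= maxabs X.
Proof.
move=> H; have [_ E] := fHbM_entry H.
apply: maxabs_le; first exact: maxabs_ge0.
move=> i j; rewrite E normrM normfV (gtr0_norm (srow_gt0 (H i))).
rewrite ler_pdivrMr ?srow_gt0 // /srow mulr_sumr mxE.
apply: (le_trans (ler_norm_sum _ _ _)); apply: ler_sum => k _.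
rewrite !mxE normrM mulrC; apply: ler_wpM2r => //; exact: maxabs_ge.
Qed.

Lemma nzrow_scale X c : 0 < c -> S_nzrow X -> S_nzrow (c *: X).
Proof.
move=> c0 H i; have [j Hj] := nzrow_ex (H i).
apply/eqP => /rowP/(_ j); rewrite !mxE => /eqP; rewrite mulf_eq0 (negPf Hj) orbF.
by rewrite gt_eqF.
Qed.

Lemma fHbM_scale X c : 0 < c -> S_nzrow X -> fHbM (c *: X) = c *: fHbM X.
Proof.
move=> c0 H.
have [_ E1] := fHbM_entry (nzrow_scale c0 H).
have [_ E2] := fHbM_entry H.
move: (fHbM X) E2 => F E2; apply/matrixP => i j; rewrite E1 [RHS]mxE E2.
have -> : srow (c *: X) i = c * srow X i.
  by rewrite /srow mulr_sumr; apply: eq_bigr => k _; rewrite mxE normrM gtr0_norm.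
have -> : ((c *: X) *m (c *: X)^T) i j = c * c * (X *m X^T) i j.
  by rewrite !mxE mulr_sumr; apply: eq_bigr => k _; rewrite !mxE; ring.
have s0 := srow_gt0 (H i).
field; by rewrite ?gt_eqF.
Qed.

End H.

From Stdlib Require Import FunctionalExtensionality.

Theorem proposition3p3 (R : realFieldType) (n : nat) (X0 : 'M[R]_n) :
  S_nzrow X0 ->
  (* (i) *)
  (forall X : 'M[R]_n, S_nzrow X -> Dabs X \in unitmx /\ S_ssymm_pos (fHbM X)) /\
  (* (ii) *)
  (exists! X : nat -> 'M[R]_n, is_solution X0 X) /\
  (* (iii) *)
  (forall X : nat -> 'M[R]_n, is_solution X0 X ->
     forall t : nat, maxabs (X t.+1) <= maxabs (X t) /\ maxabs (X t) <= maxabs (X 0%N)) /\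
  (* (iv) *)
  (forall (c : R) (X : nat -> 'M[R]_n), 0 < c -> is_solution X0 X ->
     is_solution (c *: X0) (fun t => c *: X t)).
Proof.
move=> H0; split.
  move=> X HX; split; [exact: (fHbM_entry HX).1 | exact: fHbM_ssymm].
split.
  exists (fun t => iter t (@fHbM R n) X0).
  have nz t : S_nzrow (iter t (@fHbM R n) X0).
    elim: t => [|t IH] //=; exact: ssymm_nzrow (fHbM_ssymm IH).
  split; first by split=> // t; split.
  move=> Y [Y0 HY]; apply: functional_extensionality => t.
  elim: t => [|t IH] /=; first by rewrite Y0.
  by rewrite (HY t).2 IH.
split.
  move=> X [X0E HX] t.
  have step k : maxabs (X k.+1) <= maxabs (X k).
    by rewrite (HX k).2; apply: fHbM_max; exact: (HX k).1.
  split; first exact: step.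
  elim: t => [|t IH] //; exact: le_trans (step t) IH.
move=> c X c0 [X0E HX]; split; first by rewrite X0E.
move=> t; have [nz e] := HX t; split; first exact: nzrow_scale.
by rewrite e fHbM_scale.
Qed.
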